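(* Let $(\mathcal{X},\mathcal{T})$ be a partially monotone system of order $N\geq2$ as in the context, where each $(X_i,\leq_i)$ is a bi-directed partially ordered set and $d_i$ is a complete metric on $X_i$. Assume there exists $\varphi\in\Phi$ such that $$d_i\big(T_i(x),T_i(y)\big)\leq\varphi\Big(\max_{1\le j\le N}d_j(x_j,y_j)\Big)\quad\text{for all }i\in\{1,\ldots,N\}\text{ and all }x,y\in X\text{ with }x\preccurlyeq_i y.$$ Assume also that either (d1) each $T_i$ is continuous (with respect to the product topology on $X$), or (d2) for every $i$, every nondecreasing convergent sequence in $X_i$ is bounded from above by its limit and every nonincreasing convergent sequence in $X_i$ is bounded from below by its limit. If there exist $x^0,y^0\in X$ such that $$x^0_i\leq_i T_i(\sigma_i(x^0,y^0))\quad\text{and}\quad y^0_i\geq_i T_i(\sigma_i(y^0,x^0))\quad\text{for all }i\in\{1,\ldots,N\},$$ then the system $x_i=T_i(x_1,\ldots,x_N)$, $i=1,\ldots,N$, has a unique solution $x^\ast\in X$. Moreover, for every $u^0,v^0\in X$, the sequences $(u^n),(v^n)$ in $X$ defined by $$u^{n+1}_i=T_i(\sigma_i(u^n,v^n)),\qquad v^{n+1}_i=T_i(\sigma_i(v^n,u^n))\qquad(i=1,\ldots,N,\ n\geq0)$$ satisfy $u^n_i\to x^\ast_i$ and $v^n_i\to x^\ast_i$ as $n\to\infty$ for all $i$.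
   Context: Let $N\geq2$ and let $(X_i,\leq_i)$, $i=1,\ldots,N$, be quasi-ordered sets. Let $X=X_1\times\cdots\times X_N$, with components $x=(x_1,\ldots,x_N)$. Let $T_i:X\to X_i$, $i=1,\dots,N$. The system is partially monotone if for each pair $(i,j)$ a type $\epsilon_{i,j}\in\{+,-\}$ is fixed such that $T_i$ is nondecreasing in its $j$-th variable (all other variables fixed) when $\epsilon_{i,j}=+$ and nonincreasing in its $j$-th variable when $\epsilon_{i,j}=-$ (if $T_i$ is constant in the $j$-th variable either type may be chosen, but once fixed it is used consistently). For each $i$ define $\sigma_i=(\sigma_{i,1},\ldots,\sigma_{i,N}):X^2\to X$ by $\sigma_{i,j}(x,y)=x_j$ if $\epsilon_{i,j}=+$ and $\sigma_{i,j}(x,y)=y_j$ if $\epsilon_{i,j}=-$. The quasi-order $\preccurlyeq_i$ on $X$ is: $x\preccurlyeq_i y$ iff for all $j$, $x_j\leq_j y_j$ when $\epsilon_{i,j}=+$ and $x_j\geq_j y_j$ when $\epsilon_{i,j}=-$. A quasi-ordered set is bi-directed if every two-element subset has both a lower bound and an upper bound. $\Phi$ is the set of nondecreasing functions $\varphi:[0,\infty)\to[0,\infty)$ with $\varphi^n(t)\to0$ as $n\to\infty$ for every $t\geq0$ ($\varphi^n$ the $n$-th iterate). *)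

(* Defs.v *)
From mathcomp Require Import ssreflect ssrfun ssrbool eqtype ssrnat seq choice fintype.
From Stdlib Require Import Reals.
Set Implicit Arguments.
Unset Strict Implicit.

Local Open Scope R_scope.

Definition is_partial_order (A : Type) (le : A -> A -> Prop) : Prop :=
  (forall x, le x x) /\
  (forall x y z, le x y -> le y z -> le x z) /\
  (forall x y, le x y -> le y x -> x = y).

Definition bi_directed (A : Type) (le : A -> A -> Prop) : Prop :=
  forall x y : A, (exists l, le l x /\ le l y) /\ (exists u, le x u /\ le y u).

Definition is_metric (A : Type) (d : A -> A -> R) : Prop :=
  (forall x y, 0 <= d x y) /\
  (forall x y, d x y = 0 <-> x = y) /\
  (forall x y, d x y = d y x) /\
  (forall x y z, d x z <= d x y + d y z).

Definition mconv (A : Type) (d : A -> A -> R) (s : nat -> A) (l : A) : Prop :=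
  forall eps, 0 < eps -> exists M : nat, forall n : nat, (M <= n)%nat -> d (s n) l < eps.

Definition mcauchy (A : Type) (d : A -> A -> R) (s : nat -> A) : Prop :=
  forall eps, 0 < eps -> exists M : nat, forall m n : nat,
      (M <= m)%nat -> (M <= n)%nat -> d (s m) (s n) < eps.

Definition mcomplete (A : Type) (d : A -> A -> R) : Prop :=
  forall s : nat -> A, mcauchy d s -> exists l, mconv d s l.

Definition in_Phi (phi : R -> R) : Prop :=
  (forall t, 0 <= t -> 0 <= phi t) /\
  (forall s t, 0 <= s -> s <= t -> phi s <= phi t) /\
  (forall t, 0 <= t -> Un_cv (fun n => Nat.iter n phi t) 0).

Section System.
Variable N : nat.
Variable X : 'I_N -> Type.

Definition prodX := forall j : 'I_N, X j.

(** eps i j = true means type '+', false means type '-' *)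
Definition partially_monotone (le : forall i, X i -> X i -> Prop)
  (T : forall i, prodX -> X i) (eps : 'I_N -> 'I_N -> bool) : Prop :=
  forall (i j : 'I_N) (x y : prodX),
    (forall k, k <> j -> x k = y k) ->
    le j (x j) (y j) ->
    if eps i j then le i (T i x) (T i y) else le i (T i y) (T i x).

Definition sigmaS (eps : 'I_N -> 'I_N -> bool) (i : 'I_N) (x y : prodX) : prodX :=
  fun j => if eps i j then x j else y j.

Definition prec (le : forall i, X i -> X i -> Prop) (eps : 'I_N -> 'I_N -> bool)
  (i : 'I_N) (x y : prodX) : Prop :=
  forall j, if eps i j then le j (x j) (y j) else le j (y j) (x j).

Definition dmax (d : forall i, X i -> X i -> R) (x y : prodX) : R :=
  foldr Rmax 0 (map (fun j => d j (x j) (y j)) (enum 'I_N)).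

Definition prod_continuous (d : forall i, X i -> X i -> R) (i : 'I_N)
  (F : prodX -> X i) : Prop :=
  forall (x : prodX) (e : R), 0 < e -> exists delta, 0 < delta /\
    forall y : prodX, (forall j, d j (x j) (y j) < delta) -> d i (F x) (F y) < e.

Definition uv_seq (T : forall i, prodX -> X i) (eps : 'I_N -> 'I_N -> bool)
  (u0 v0 : prodX) (n : nat) : prodX * prodX :=
  Nat.iter n (fun p : prodX * prodX =>
     (fun i => T i (sigmaS eps i p.1 p.2), fun i => T i (sigmaS eps i p.2 p.1)))
    (u0, v0).

End System.

(* Main.v *)
Require Import Defs.
From mathcomp Require Import ssreflect ssrfun ssrbool eqtype ssrnat seq choice fintype.
From Stdlib Require Import Reals Lra Lia ClassicalEpsilon FunctionalExtensionality.
From mathcomp Require Import zify.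
Set Implicit Arguments. Unset Strict Implicit.
Local Open Scope R_scope.

Lemma le_eps (a b : R) : (forall e, 0 < e -> a <= b + e) -> a <= b.
Proof.
move=> H; destruct (Rle_lt_dec a b) as [h|h]; first done.
have := H ((a-b)/2) ltac:(lra). lra.
Qed.

Lemma Un_cv_lt (u : nat -> R) : Un_cv u 0 -> (forall n, 0 <= u n) ->
  forall e, 0 < e -> exists M : nat, forall n, (M <= n)%nat -> u n < e.
Proof.
move=> H Hp e he; case: (H e he) => M HM; exists M => n /leP hn.
have := HM n hn; rewrite /R_dist Rminus_0_r Rabs_pos_eq //.
Qed.

Section PhiLemmas.
Variable phi : R -> R.
Hypothesis Hphi : in_Phi phi.

Lemma phi_nonneg t : 0 <= t -> 0 <= phi t.
Proof. by case: Hphi => h _; apply: h. Qed.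

Lemma phi_mono s t : 0 <= s -> s <= t -> phi s <= phi t.
Proof. case: Hphi => _ [h _]; exact: h. Qed.

Lemma iter_nonneg n t : 0 <= t -> 0 <= Nat.iter n phi t.
Proof. move=> ht; elim: n => [|n IH] //=; exact: phi_nonneg. Qed.

Lemma phi_lt t : 0 < t -> phi t < t.
Proof.
move=> ht; destruct (Rlt_le_dec (phi t) t) as [h|h]; first done.
exfalso.
have Hn : forall n, t <= Nat.iter n phi t.
  elim=> [|n IH] /=; first lra.
  apply: Rle_trans h _; apply: phi_mono; lra.
case: Hphi => _ [_ Hc].
case: (@Un_cv_lt _ (Hc t ltac:(lra)) (fun n => iter_nonneg n (Rlt_le _ _ ht)) t ht) => M HM.
have := HM M (leqnn M); have := Hn M; lra.
Qed.

Lemma phi_le t : 0 <= t -> phi t <= t.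
Proof.
move=> ht; case: (Rle_lt_or_eq_dec _ _ ht) => h; first by have := phi_lt h; lra.
subst t; apply: le_eps => e he.
have := phi_mono (Rle_refl 0) (Rlt_le _ _ he); have := phi_lt he; lra.
Qed.

Lemma iter_cv t : 0 <= t -> forall e, 0 < e -> exists M : nat, forall n, (M <= n)%nat -> Nat.iter n phi t < e.
Proof. move=> ht; case: Hphi => _ [_ Hc]; apply: Un_cv_lt; first exact: Hc.
  move=> n; exact: iter_nonneg. Qed.

End PhiLemmas.

Section Abstract.
Variable phi : R -> R.
Hypothesis Hphi : in_Phi phi.
Variable Z : Type.
Variable D : Z -> Z -> R.
Variable Rl : Z -> Z -> Prop.
Variable F : Z -> Z.
Hypothesis D0 : forall p q, 0 <= D p q.
Hypothesis Dsym : forall p q, D p q = D q p.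
Hypothesis Dtri : forall p q r, D p r <= D p q + D q r.
Hypothesis Drefl : forall p, D p p = 0.
Hypothesis Rrefl : forall p, Rl p p.
Hypothesis Rtrans : forall p q r, Rl p q -> Rl q r -> Rl p r.
Hypothesis Fmono : forall p q, Rl p q -> Rl (F p) (F q).
Hypothesis Fcontr : forall p q, Rl p q -> D (F p) (F q) <= phi (D p q).

Lemma contr' p q : Rl p q \/ Rl q p -> D (F p) (F q) <= phi (D p q).
Proof. case=> h; first exact: Fcontr. rewrite Dsym (Dsym p); exact: Fcontr. Qed.

Lemma it_mono n p q : Rl p q -> Rl (Nat.iter n F p) (Nat.iter n F q).
Proof. move=> h; elim: n => [|n IH] //=; exact: Fmono. Qed.

Lemma it_contr n p q : Rl p q \/ Rl q p ->
  D (Nat.iter n F p) (Nat.iter n F q) <= Nat.iter n phi (D p q).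
Proof.
move=> h; elim: n => [|n IH] /=; first exact: Rle_refl.
apply: Rle_trans (contr' _) _.
  case: h => h; [left|right]; exact: it_mono.
exact: (phi_mono Hphi (D0 _ _) IH).
Qed.

Lemma it_S n p : Nat.iter n F (F p) = Nat.iter n.+1 F p.
Proof. elim: n => [|n IH] //=; by rewrite IH. Qed.

Lemma step p : Rl p (F p) -> forall m, Rl (Nat.iter m F p) (Nat.iter m.+1 F p).
Proof. move=> h; elim=> [|m IH] //=; exact: Fmono. Qed.

Lemma chain p : Rl p (F p) -> forall n k, Rl (Nat.iter n F p) (Nat.iter (k + n) F p).
Proof.
move=> h n; elim=> [|k IH]; first exact: Rrefl.
rewrite addSn; apply: Rtrans IH (step h _).
Qed.

Lemma cauchy p : Rl p (F p) -> forall e, 0 < e -> exists M : nat, forall m n,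
  (M <= m)%nat -> (M <= n)%nat -> D (Nat.iter m F p) (Nat.iter n F p) <= e.
Proof.
move=> hp e he.
pose e' := e / 2.
have he' : 0 < e' by rewrite /e'; lra.
have hpl := phi_lt Hphi he'.
have hd : 0 < e' - phi e' by lra.
case: (iter_cv Hphi (D0 p (F p)) hd) => M HM.
have HMd : D (Nat.iter M F p) (Nat.iter M.+1 F p) < e' - phi e'.
  rewrite -it_S; exact: (Rle_lt_trans _ _ _ (it_contr M (or_introl hp)) (HM M (leqnn M))).
have claim : forall k, D (Nat.iter (k + M) F p) (Nat.iter M F p) <= e'.
  elim=> [|k IH]; first by rewrite add0n Drefl; lra.
  rewrite addSn /=.
  apply: Rle_trans (Dtri _ (Nat.iter M.+1 F p) _) _.
  have h1 : D (F (Nat.iter (k + M) F p)) (Nat.iter M.+1 F p) <= phi e'.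
    rewrite /=; apply: Rle_trans (contr' _) _.
      right; exact: chain.
    exact: (phi_mono Hphi (D0 _ _) IH).
  rewrite Dsym in HMd; lra.
exists M => m n hm hn.
apply: Rle_trans (Dtri _ (Nat.iter M F p) _) _.
rewrite -(subnK hm) -(subnK hn) (Dsym _ (Nat.iter (n - M + M)%nat F p)).
have := claim (m - M)%nat; have := claim (n - M)%nat; rewrite /e'; lra.
Qed.

Lemma global ps q w : F ps = ps -> Rl q w -> Rl ps w ->
  forall e, 0 < e -> exists M : nat, forall n, (M <= n)%nat -> D (Nat.iter n F q) ps <= e.
Proof.
move=> hf hq hw e he.
have hfix : forall n, Nat.iter n F ps = ps by elim=> [|n IH] //=; rewrite IH.
have he2 : 0 < e/2 by lra.
case: (iter_cv Hphi (D0 q w) he2) => M1 HM1.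
case: (iter_cv Hphi (D0 w ps) he2) => M2 HM2.
exists (maxn M1 M2) => n hn.
have h1 := HM1 n (leq_trans (leq_maxl _ _) hn).
have h2 := HM2 n (leq_trans (leq_maxr _ _) hn).
apply: Rle_trans (Dtri _ (Nat.iter n F w) _) _.
have h3 := it_contr n (or_introl hq).
have h4 := it_contr n (or_intror (B := Rl ps w) hw).
rewrite hfix in h4.
lra.
Qed.

End Abstract.

Lemma foldmax_ge0 (A : Type) (f : A -> R) l : 0 <= foldr Rmax 0 (map f l).
Proof. elim: l => [|a l IH] /=; [lra | apply: Rle_trans IH (Rmax_r _ _)]. Qed.

Lemma foldmax_lub (A : Type) (f : A -> R) l c :
  0 <= c -> (forall a, f a <= c) -> foldr Rmax 0 (map f l) <= c.
Proof. move=> h0 h; elim: l => [|a l IH] //=; exact: Rmax_lub. Qed.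

Lemma foldmax_ub (A : eqType) (f : A -> R) l a : a \in l -> f a <= foldr Rmax 0 (map f l).
Proof.
elim: l => [|b l IH] //=; rewrite in_cons; case/orP => [/eqP->|h].
  exact: Rmax_l.
apply: Rle_trans (IH h) (Rmax_r _ _).
Qed.

Section Concrete.
Unset Implicit Arguments.
Variable N : nat.
Variable X : 'I_N -> Type.
Variable le : forall i, X i -> X i -> Prop.
Variable d : forall i, X i -> X i -> R.
Variable T : forall i, prodX X -> X i.
Variable eps : 'I_N -> 'I_N -> bool.
Hypothesis Hpo : forall i, is_partial_order (le i).
Hypothesis Hmet : forall i, is_metric (d i).
Hypothesis Hmono : partially_monotone le T eps.
Variable phi : R -> R.
Hypothesis Hphi : in_Phi phi.
Hypothesis Hcontr : forall i (x y : prodX X), prec le eps i x y ->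
      d i (T i x) (T i y) <= phi (dmax d x y).

Lemma d0 i a b : 0 <= d i a b. Proof. by case: (Hmet i). Qed.
Lemma dsym i a b : d i a b = d i b a. Proof. by case: (Hmet i) => _ [_ [h _]]. Qed.
Lemma dtri i a b c : d i a c <= d i a b + d i b c. Proof. by case: (Hmet i) => _ [_ [_ h]]. Qed.
Lemma drefl i a : d i a a = 0. Proof. case: (Hmet i) => _ [h _]; exact: (proj2 (h a a) erefl). Qed.
Lemma deq i a b : d i a b = 0 -> a = b. Proof. case: (Hmet i) => _ [h _]; exact: (proj1 (h a b)). Qed.

Lemma dmax_ge0 x y : 0 <= dmax d x y.
Proof. exact: foldmax_ge0. Qed.
Lemma dmax_ub x y j : d j (x j) (y j) <= dmax d x y.
Proof. apply: (foldmax_ub (fun j => d j (x j) (y j))); by rewrite mem_enum. Qed.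
Lemma dmax_lub x y c : 0 <= c -> (forall j, d j (x j) (y j) <= c) -> dmax d x y <= c.
Proof. exact: foldmax_lub. Qed.
Lemma dmax_sym x y : dmax d x y = dmax d y x.
Proof.
apply: Rle_antisym; apply: dmax_lub; try exact: dmax_ge0;
  move=> j; rewrite dsym; exact: dmax_ub.
Qed.
Lemma dmax_tri x y z : dmax d x z <= dmax d x y + dmax d y z.
Proof.
apply: dmax_lub; first by have := dmax_ge0 x y; have := dmax_ge0 y z; lra.
move=> j; apply: Rle_trans (dtri j _ (y j) _) _.
have := dmax_ub x y j; have := dmax_ub y z j; lra.
Qed.

Definition Z := (prodX X * prodX X)%type.
Definition Rz (p q : Z) := (forall j, le j (p.1 j) (q.1 j)) /\ (forall j, le j (q.2 j) (p.2 j)).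
Definition Dz (p q : Z) := Rmax (dmax d p.1 q.1) (dmax d p.2 q.2).
Definition Fz (p : Z) : Z :=
  (fun i => T i (sigmaS eps i p.1 p.2), fun i => T i (sigmaS eps i p.2 p.1)).

Lemma Dz0 p q : 0 <= Dz p q.
Proof. apply: Rle_trans (Rmax_l _ _); exact: dmax_ge0. Qed.
Lemma Dzsym p q : Dz p q = Dz q p.
Proof. by rewrite /Dz dmax_sym (dmax_sym p.2). Qed.
Lemma Dztri p q r : Dz p r <= Dz p q + Dz q r.
Proof.
rewrite /Dz; apply: Rmax_lub.
  apply: Rle_trans (dmax_tri _ q.1 _) _; apply: Rplus_le_compat; exact: Rmax_l.
apply: Rle_trans (dmax_tri _ q.2 _) _; apply: Rplus_le_compat; exact: Rmax_r.
Qed.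
Lemma Dzrefl p : Dz p p = 0.
Proof.
have h : forall x, dmax d x x = 0.
  move=> x; apply: Rle_antisym; last exact: dmax_ge0.
  apply: dmax_lub; first lra. move=> j; rewrite drefl; lra.
by rewrite /Dz !h Rmax_left; lra.
Qed.
Lemma Dz_ub1 (p q : Z) j : d j (p.1 j) (q.1 j) <= Dz p q.
Proof. apply: Rle_trans (Rmax_l _ _); exact: dmax_ub. Qed.
Lemma Dz_ub2 (p q : Z) j : d j (p.2 j) (q.2 j) <= Dz p q.
Proof. apply: Rle_trans (Rmax_r _ _); exact: dmax_ub. Qed.

Lemma pair_eq (p q : Z) : p.1 = q.1 -> p.2 = q.2 -> p = q.
Proof. by case: p; case: q => /= ? ? ? ? -> ->. Qed.

Lemma Dz_eq p q : Dz p q <= 0 -> p = q.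
Proof.
move=> h; apply: pair_eq; apply: functional_extensionality_dep => j; apply: (@deq j);
  apply: Rle_antisym; try exact: d0.
  by apply: Rle_trans h; exact: Dz_ub1.
by apply: Rle_trans h; exact: Dz_ub2.
Qed.

Lemma Rz_refl p : Rz p p.
Proof. split=> j; by case: (Hpo j). Qed.
Lemma Rz_trans p q r : Rz p q -> Rz q r -> Rz p r.
Proof.
case=> h1 h2 [h3 h4]; split=> j; case: (Hpo j) => _ [ht _].
  exact: ht (h1 j) (h3 j).
exact: ht (h4 j) (h2 j).
Qed.


Lemma T_mono i (x y : prodX X) : prec le eps i x y -> le i (T i x) (T i y).
Proof.
move=> Hp.
pose z (k : nat) : prodX X := fun j => if (j < k)%nat then y j else x j.
have Hz0 : z 0%nat = x by apply: functional_extensionality_dep => j.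
have HzN : z N = y by apply: functional_extensionality_dep => j; rewrite /z ltn_ord.
case: (Hpo i) => Hrefl [Htr _].
have key : forall k, le i (T i x) (T i (z k)).
  elim=> [|k IH]; first by rewrite Hz0.
  case: (ltnP k N) => hk.
  - pose jk := Ordinal hk.
    have Hdiff : forall j, j <> jk -> z k j = z k.+1 j.
      move=> j hj; rewrite /z.
      have hne : (nat_of_ord j == k) = false.
        apply/negbTE/eqP => e; apply: hj; apply: val_inj; exact: e.
      by rewrite [(j < k.+1)%nat]ltnS (leq_eqVlt j) hne.
    have E1 : z k jk = x jk by rewrite /z /= ltnn.
    have E2 : z k.+1 jk = y jk by rewrite /z /= ltnSn.
    have Hstep : le i (T i (z k)) (T i (z k.+1)).
      have := Hmono i jk (z k) (z k.+1) Hdiff.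
      have := Hmono i jk (z k.+1) (z k) (fun j hj => esym (Hdiff j hj)).
      have := Hp jk.
      rewrite E1 E2.
      case: (eps i jk) => hp h1 h2.
      + exact: h2.
      + exact: h1.
    exact: Htr IH Hstep.
  - have -> : z k.+1 = z k.
      apply: functional_extensionality_dep => j; rewrite /z.
      have h1 : (j < k.+1)%nat by apply: leq_trans (ltn_ord j) (leqW hk).
      have h2 : (j < k)%nat by apply: leq_trans (ltn_ord j) hk.
      by rewrite h1 h2.
    exact: IH.
rewrite -HzN; exact: key.
Qed.

Lemma Fz_mono p q : Rz p q -> Rz (Fz p) (Fz q).
Proof.
case=> h1 h2; split=> i /=; apply: T_mono => j; rewrite /sigmaS; case: (eps i j).
- exact: h1.
- exact: h2.
- exact: h2.
- exact: h1.
Qed.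

Lemma Fz_contr p q : Rz p q -> Dz (Fz p) (Fz q) <= phi (Dz p q).
Proof.
move=> hr; case: hr => h1 h2.
have hpos : 0 <= phi (Dz p q) by exact: (phi_nonneg Hphi (Dz0 p q)).
rewrite /Dz /=; apply: Rmax_lub; apply: dmax_lub => // i.
- apply: Rle_trans (Hcontr _ _ _ _) _.
    move=> j; rewrite /sigmaS; case: (eps i j); [exact: h1 | exact: h2].
  apply: (phi_mono Hphi (dmax_ge0 _ _)); apply: dmax_lub; first exact: Dz0.
  move=> j; rewrite /sigmaS; case: (eps i j); [exact: Dz_ub1 | exact: Dz_ub2].
- rewrite dsym; apply: Rle_trans (Hcontr _ _ _ _) _.
    move=> j; rewrite /sigmaS; case: (eps i j); [exact: h2 | exact: h1].
  apply: (phi_mono Hphi (dmax_ge0 _ _)); apply: dmax_lub; first exact: Dz0.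
  move=> j; rewrite /sigmaS dsym; case: (eps i j); [exact: Dz_ub2 | exact: Dz_ub1].
Qed.


Lemma lim_bound (A : Type) (dA : A -> A -> R)
  (tri : forall a b c, dA a c <= dA a b + dA b c)
  (s : nat -> A) (l a : A) (M : nat) (e : R) :
  mconv dA s l -> (forall m, (M <= m)%nat -> dA a (s m) <= e) -> dA a l <= e.
Proof.
move=> hc hb; apply: le_eps => eta heta.
case: (hc eta heta) => M' HM'.
have h1 := hb (maxn M M') (leq_maxl _ _).
have h2 := HM' (maxn M M') (leq_maxr _ _).
have := tri a (s (maxn M M')) l; lra.
Qed.

Lemma sigma_same i (z : prodX X) : sigmaS eps i z z = z.
Proof. apply: functional_extensionality_dep => j; rewrite /sigmaS; by case: (eps i j). Qed.

Lemma fix_iter (p : Z) : Fz p = p -> forall n, Nat.iter n Fz p = p.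
Proof. move=> h; elim=> [|n IH] //=; by rewrite IH. Qed.

Lemma cont_fix1 (s : nat -> Z) (ps : Z) :
  (forall i, prod_continuous d (T i)) -> (forall n, s n.+1 = Fz (s n)) ->
  (forall e, 0 < e -> exists M : nat, forall n, (M <= n)%nat -> Dz (s n) ps <= e) ->
  forall i, (Fz ps).1 i = ps.1 i.
Proof.
move=> Hc hs hU i; apply: (deq i); apply: Rle_antisym; last exact: d0.
apply: le_eps => e he; rewrite Rplus_0_l.
have he2 : 0 < e / 2 by lra.
case: (Hc i (sigmaS eps i ps.1 ps.2) (e/2) he2) => delta [hdel Hdel].
have hmin : 0 < Rmin (delta/2) (e/2) by apply: Rmin_pos; lra.
case: (hU _ hmin) => M HM.
have h1 := HM M (leqnn M); have h2 := HM M.+1 (leqnSn M).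
have hm1 := Rmin_l (delta/2) (e/2); have hm2 := Rmin_r (delta/2) (e/2).
have h3 : d i (T i (sigmaS eps i ps.1 ps.2)) (T i (sigmaS eps i (s M).1 (s M).2)) < e/2.
  apply: Hdel => j; rewrite /sigmaS; case: (eps i j); rewrite dsym.
  + have := Dz_ub1 (s M) ps j; lra.
  + have := Dz_ub2 (s M) ps j; lra.
have h4 := Dz_ub1 (s M.+1) ps i.
rewrite hs in h4 h2.
have := dtri i ((Fz ps).1 i) ((Fz (s M)).1 i) (ps.1 i).
rewrite /= in h4 *; lra.
Qed.

Lemma main (Hbd : forall i, bi_directed (le i)) (Hcomp : forall i, mcomplete (d i))
  (Hd : (forall i : 'I_N, prod_continuous d (T i)) \/
        (forall i (s : nat -> X i) (l : X i),
           (forall n, le i (s n) (s (S n))) -> mconv (d i) s l -> forall n, le i (s n) l) /\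
        (forall i (s : nat -> X i) (l : X i),
           (forall n, le i (s (S n)) (s n)) -> mconv (d i) s l -> forall n, le i l (s n)))
  (x0 y0 : prodX X)
  (Hx0 : forall i, le i (x0 i) (T i (sigmaS eps i x0 y0)))
  (Hy0 : forall i, le i (T i (sigmaS eps i y0 x0)) (y0 i)) :
  exists xs : prodX X,
    (forall i, xs i = T i xs) /\
    (forall z : prodX X, (forall i, z i = T i z) -> z = xs) /\
    (forall u0 v0 : prodX X, forall i,
       mconv (d i) (fun n => (uv_seq T eps u0 v0 n).1 i) (xs i) /\
       mconv (d i) (fun n => (uv_seq T eps u0 v0 n).2 i) (xs i)).
Proof.
pose p0 : Z := (x0, y0).
have hp0 : Rz p0 (Fz p0) by split.
have hC := cauchy Hphi Dz0 Dzsym Dztri Dzrefl Rz_refl Rz_trans Fz_mono Fz_contr hp0.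
have hu : forall j, exists l, mconv (d j) (fun n => (Nat.iter n Fz p0).1 j) l.
  move=> j; apply: Hcomp => e he.
  have he2 : 0 < e / 2 by lra.
  case: (hC _ he2) => M HM; exists M => m n hm hn.
  have := HM m n hm hn; have := Dz_ub1 (Nat.iter m Fz p0) (Nat.iter n Fz p0) j; lra.
have hv : forall j, exists l, mconv (d j) (fun n => (Nat.iter n Fz p0).2 j) l.
  move=> j; apply: Hcomp => e he.
  have he2 : 0 < e / 2 by lra.
  case: (hC _ he2) => M HM; exists M => m n hm hn.
  have := HM m n hm hn; have := Dz_ub2 (Nat.iter m Fz p0) (Nat.iter n Fz p0) j; lra.
pose u : prodX X := fun j => proj1_sig (constructive_indefinite_description _ (hu j)).
pose v : prodX X := fun j => proj1_sig (constructive_indefinite_description _ (hv j)).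
have Hu : forall j, mconv (d j) (fun n => (Nat.iter n Fz p0).1 j) (u j).
  move=> j; exact: (proj2_sig (constructive_indefinite_description _ (hu j))).
have Hv : forall j, mconv (d j) (fun n => (Nat.iter n Fz p0).2 j) (v j).
  move=> j; exact: (proj2_sig (constructive_indefinite_description _ (hv j))).
clearbody u v.
pose ps : Z := (u, v).
have hU : forall e, 0 < e -> exists M : nat, forall n, (M <= n)%nat -> Dz (Nat.iter n Fz p0) ps <= e.
  move=> e he; case: (hC _ he) => M HM; exists M => n hn.
  apply: Rmax_lub; apply: dmax_lub; try lra; move=> j /=.
  + refine (lim_bound _ _ (dtri j) _ _ _ M _ (Hu j) _) => m hm.
    apply: Rle_trans (HM n m hn hm); exact: Dz_ub1.
  + refine (lim_bound _ _ (dtri j) _ _ _ M _ (Hv j) _) => m hm.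
    apply: Rle_trans (HM n m hn hm); exact: Dz_ub2.
have hfix : Fz ps = ps.
  case: Hd => [Hcont | [Hup Hdown]].
  - have e1 := cont_fix1 (fun n => Nat.iter n Fz p0) ps Hcont (fun n => erefl) hU.
    have e2 := cont_fix1 (fun n => ((Nat.iter n Fz p0).2, (Nat.iter n Fz p0).1))
       (v, u) Hcont (fun n => erefl).
    apply: pair_eq; apply: functional_extensionality_dep => i.
    + exact: e1.
    + apply: e2 => e he; case: (hU e he) => M HM; exists M => n hn.
      have := HM n hn; by rewrite /Dz Rmax_comm.
  - have hR : forall n, Rz (Nat.iter n Fz p0) ps.
      move=> n; split=> j.
      + exact: (Hup j (fun n => (Nat.iter n Fz p0).1 j) (u j)
                  (fun n => (step Fz_mono hp0 n).1 j) (Hu j) n).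
      + exact: (Hdown j (fun n => (Nat.iter n Fz p0).2 j) (v j)
                  (fun n => (step Fz_mono hp0 n).2 j) (Hv j) n).
    apply: Dz_eq; apply: le_eps => e he; rewrite Rplus_0_l.
    have he2 : 0 < e / 2 by lra.
    case: (hU _ he2) => M HM.
    have h1 := HM M (leqnn M); have h2 := HM M.+1 (leqnSn M).
    have h3 := Fz_contr _ _ (hR M).
    have h4 := phi_le Hphi (Dz0 (Nat.iter M Fz p0) ps).
    have := Dztri (Fz ps) (Nat.iter M.+1 Fz p0) ps.
    rewrite Dzsym in h3; rewrite /= in h2 h3 *; lra.
have hG : forall q : Z, forall e, 0 < e -> exists M : nat, forall n, (M <= n)%nat ->
    Dz (Nat.iter n Fz q) ps <= e.
  move=> q.
  pose w1 : prodX X := fun j =>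
    proj1_sig (constructive_indefinite_description _ ((Hbd j (q.1 j) (u j)).2)).
  pose w2 : prodX X := fun j =>
    proj1_sig (constructive_indefinite_description _ ((Hbd j (q.2 j) (v j)).1)).
  have hw1 : forall j, le j (q.1 j) (w1 j) /\ le j (u j) (w1 j).
    move=> j; exact: (proj2_sig (constructive_indefinite_description _ ((Hbd j (q.1 j) (u j)).2))).
  have hw2 : forall j, le j (w2 j) (q.2 j) /\ le j (w2 j) (v j).
    move=> j; exact: (proj2_sig (constructive_indefinite_description _ ((Hbd j (q.2 j) (v j)).1))).
  have hq : Rz q (w1, w2) by split=> j; [exact: (hw1 j).1 | exact: (hw2 j).1].
  have hw : Rz ps (w1, w2) by split=> j; [exact: (hw1 j).2 | exact: (hw2 j).2].
  move=> e he; exact: (global Hphi Dz0 Dzsym Dztri Fz_mono Fz_contr hfix hq hw he).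
have hzero : forall q : Z, Fz q = q -> q = ps.
  move=> q hq; apply: Dz_eq; apply: le_eps => e he; rewrite Rplus_0_l.
  case: (hG q e he) => M HM; have := HM M (leqnn M); by rewrite fix_iter.
have hsw : Fz (v, u) = (v, u).
  have h : Fz (v, u) = ((Fz ps).2, (Fz ps).1) by [].
  by rewrite h hfix.
have huv : v = u by have := hzero _ hsw; case.
subst v.
have hfu : forall i, T i u = u i.
  move=> i; have := f_equal (fun p : Z => p.1 i) hfix; by rewrite /= sigma_same.
exists u; split; [|split].
- move=> i; by rewrite hfu.
- move=> z hz.
  have hzz : Fz (z, z) = (z, z).
    apply: pair_eq; apply: functional_extensionality_dep => i /=;
      by rewrite sigma_same hz.
  by have := hzero _ hzz; case.
- move=> u0 v0 i; split=> e he.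
  + have he2 : 0 < e / 2 by lra.
    case: (hG (u0, v0) _ he2) => M HM; exists M => n hn.
    have E : uv_seq T eps u0 v0 n = Nat.iter n Fz (u0, v0) by [].
    rewrite E; have := HM n hn; have := Dz_ub1 (Nat.iter n Fz (u0, v0)) ps i; rewrite /=; lra.
  + have he2 : 0 < e / 2 by lra.
    case: (hG (u0, v0) _ he2) => M HM; exists M => n hn.
    have E : uv_seq T eps u0 v0 n = Nat.iter n Fz (u0, v0) by [].
    rewrite E; have := HM n hn; have := Dz_ub2 (Nat.iter n Fz (u0, v0)) ps i; rewrite /=; lra.
Qed.

End Concrete.
Theorem theorem5
  (N : nat) (HN : (2 <= N)%nat)
  (X : 'I_N -> Type)
  (le : forall i, X i -> X i -> Prop)
  (d : forall i, X i -> X i -> R)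
  (T : forall i, prodX X -> X i)
  (eps : 'I_N -> 'I_N -> bool)
  (Hpo : forall i, is_partial_order (le i))
  (Hbd : forall i, bi_directed (le i))
  (Hmet : forall i, is_metric (d i))
  (Hcomp : forall i, mcomplete (d i))
  (Hmono : partially_monotone le T eps)
  (phi : R -> R) (Hphi : in_Phi phi)
  (Hcontr : forall i (x y : prodX X), prec le eps i x y ->
      d i (T i x) (T i y) <= phi (dmax d x y))
  (Hd : (forall i : 'I_N, prod_continuous d (T i)) \/
        (forall i (s : nat -> X i) (l : X i),
           (forall n, le i (s n) (s (S n))) -> mconv (d i) s l -> forall n, le i (s n) l) /\
        (forall i (s : nat -> X i) (l : X i),
           (forall n, le i (s (S n)) (s n)) -> mconv (d i) s l -> forall n, le i l (s n)))
  (x0 y0 : prodX X)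
  (Hx0 : forall i, le i (x0 i) (T i (sigmaS eps i x0 y0)))
  (Hy0 : forall i, le i (T i (sigmaS eps i y0 x0)) (y0 i)) :
  exists xs : prodX X,
    (forall i, xs i = T i xs) /\
    (forall z : prodX X, (forall i, z i = T i z) -> z = xs) /\
    (forall u0 v0 : prodX X, forall i,
       mconv (d i) (fun n => (uv_seq T eps u0 v0 n).1 i) (xs i) /\
       mconv (d i) (fun n => (uv_seq T eps u0 v0 n).2 i) (xs i)).
Proof.
exact: (main _ _ _ _ _ _ Hpo Hmet Hmono _ Hphi Hcontr Hbd Hcomp Hd _ _ Hx0 Hy0).
Qed.
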